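(* For every $t=0,1,\dots,T-1$: (a) the functions $H_t$ and $V_t$ are sub-$K_t$-convex; (b) $H_t(S_t)\le \inf_{z_j\in Z_\theta} H_t(z_j)$.
   Context: Model. Fix an integer horizon $T\ge 2$, a discount factor $\alpha\in(0,1]$, and for $t=0,\dots,T-1$: unit ordering costs $c_t\in\mathbb R$, a salvage coefficient $c_T\in\mathbb R$, setup costs $K_t\ge 0$, functions $G_t:\mathbb R\to\mathbb R$ (expected one-period holding/penalty cost), and independent nonnegative random demands $D_0,\dots,D_{T-1}$ with right-continuous distribution functions $F_t$ and finite means; all expectations appearing are assumed finite. Put $C_t(y)=(c_t-\alpha c_{t+1})y+G_t(y)+\alpha c_{t+1}E[D_t]$. Standing assumptions: (i) each $C_t$ is convex with $C_t(y)\to+\infty$ as $|y|\to\infty$; (ii) $K_t\ge \alpha K_{t+1}$ for $t=0,\dots,T-2$. Grid construction. Fix $\theta>0$, let $z_m=m\theta$ ($m\in\mathbb Z$), $Z_\theta=\{z_m:m\in\mathbb Z\}$, and $f_t(n)=F_t(z_{n+1})-F_t(z_n)$ for integers $n\ge -1$. Let $C^m_t=\min\{y: C_t(y)=\min_{x\in\mathbb R}C_t(x)\}$; with $n_0$ the integer such that $z_{n_0}<C^m_t\le z_{n_0+1}$, let $S^U_t=\min\{z_m\in Z_\theta: z_m\ge C^m_t,\ C_t(z_m)>C_t(z_{n_0})+K_t\}$. Let $s_{T-1}$ be a point with $s_{T-1}\le C^m_{T-1}$ and $C_{T-1}(s_{T-1})=C_{T-1}(C^m_{T-1})+K_{T-1}$,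 and set $\bar I_{T-1}=s_{T-1}$. For $t=T-2,\dots,0$ (backwards) set $I_t=\max\{z_m\in Z_\theta: z_m<\min(\bar I_{t+1}-\theta,\,C^m_t)\}$ and $\bar I_t=\max\{z_m\in Z_\theta: z_m\le I_t,\ C_t(z_m)>C_t(I_t)+K_t\}+\theta$. Set $H_{T-1}=C_{T-1}$, $S_{T-1}=C^m_{T-1}$. Whenever $H_t,S_t,s_t$ are defined, let $V_t(y)=H_t(S_t)+K_t$ for $y<s_t$ and $V_t(y)=H_t(y)$ for $y\ge s_t$. For $t=T-2,\dots,0$ (backwards): $H_t(y)=C_t(y)+\alpha\sum_{n=-1}^{\infty}V_{t+1}(y-z_n)f_t(n)$; $S_t=\max\{z_m\in Z_\theta: I_t\le z_m\le S^U_t,\ H_t(z_m)=\min\{H_t(z_n): z_n\in Z_\theta,\ I_t\le z_n\le S^U_t\}\}$; $s_t=S_t$ if $K_t=0$, and if $K_t>0$, $s_t=\min\{z_m\in Z_\theta:\bar I_t\le z_m\le S_t,\ H_t(z_m)\le H_t(S_t)+K_t\}$. Sub-$K$-convexity. For $K\ge 0$, a function $g:\mathbb R\to\mathbb R$ is sub-$K$-convex if for all $x\le y\le z_m$ with $x,y\in\mathbb R$, $z_m\in Z_\theta$, and $y=\tau x+(1-\tau)z_m$, $\tau\in[0,1]$, one has $g(y)\le \tau g(x)+(1-\tau)(g(z_m)+K)$. *)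

(* Defs.v *)
From Stdlib Require Import Reals ZArith.
From Coquelicot Require Import Coquelicot.
Open Scope R_scope.

Definition zgrid (theta : R) (m : Z) : R := IZR m * theta.
Definition on_grid (theta : R) (x : R) : Prop := exists m : Z, x = zgrid theta m.

Definition is_grid_min (theta : R) (P : R -> Prop) (x : R) : Prop :=
  on_grid theta x /\ P x /\ (forall m : Z, P (zgrid theta m) -> x <= zgrid theta m).
Definition is_grid_max (theta : R) (P : R -> Prop) (x : R) : Prop :=
  on_grid theta x /\ P x /\ (forall m : Z, P (zgrid theta m) -> zgrid theta m <= x).

Definition convex_fun (g : R -> R) : Prop :=
  forall x y l, 0 <= l <= 1 -> g (l * x + (1 - l) * y) <= l * g x + (1 - l) * g y.
Definition coercive (g : R -> R) : Prop :=
  is_lim g p_infty p_infty /\ is_lim g m_infty p_infty.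

Definition is_cdf_nonneg (F : R -> R) : Prop :=
  (forall x y, x <= y -> F x <= F y) /\
  (forall x, filterlim F (at_right x) (locally (F x))) /\
  (forall x, x < 0 -> F x = 0) /\
  is_lim F p_infty 1.

Definition is_mean_of_cdf (F : R -> R) (mu : R) : Prop :=
  is_RInt_gen (fun x => 1 - F x) (at_point 0) (Rbar_locally p_infty) mu.

Definition Cfun (alpha : R) (c : nat -> R) (G : nat -> R -> R) (ED : nat -> R)
  (t : nat) (y : R) : R :=
  (c t - alpha * c (t + 1)%nat) * y + G t y + alpha * c (t + 1)%nat * ED t.

Definition is_least_minimizer (g : R -> R) (x : R) : Prop :=
  (forall y, g x <= g y) /\ (forall y, (forall w, g y <= g w) -> x <= y).

Definition fprob (theta : R) (F : R -> R) (n : Z) : R :=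
  F (zgrid theta (n + 1)) - F (zgrid theta n).

Definition Vfun (H : R -> R) (S s K : R) (y : R) : R :=
  if Rlt_dec y s then H S + K else H y.

(** H_t(y) = C_t(y) + alpha * sum_{n >= -1} V_{t+1}(y - z_n) f_t(n)
    (the index n = k - 1 with k ranging over nat). *)
Definition Hstep (theta alpha : R) (Ct : R -> R) (Ft : R -> R)
  (Vnext : R -> R) (y : R) : R :=
  Ct y + alpha * Series (fun k : nat =>
     Vnext (y - zgrid theta (Z.of_nat k - 1)) * fprob theta Ft (Z.of_nat k - 1)).

Definition sub_K_convex (theta K : R) (g : R -> R) : Prop :=
  forall x y zm tau : R, on_grid theta zm -> x <= y <= zm -> 0 <= tau <= 1 ->
    y = tau * x + (1 - tau) * zm ->
    g y <= tau * g x + (1 - tau) * (g zm + K).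

(* Main.v *)
Require Import Defs.
From Stdlib Require Import Reals ZArith Lra Lia.
From Coquelicot Require Import Coquelicot.
Open Scope R_scope.

Lemma sumn_le (u v : nat -> R) : (forall k, u k <= v k) -> forall n, sum_n u n <= sum_n v n.
Proof.
  intros H n; induction n.
  - rewrite !sum_O; auto.
  - rewrite !sum_Sn. unfold plus; simpl. specialize (H (S n)). lra.
Qed.

Lemma is_series_le' (u v : nat -> R) lu lv : is_series u lu -> is_series v lv ->
  (forall k, u k <= v k) -> lu <= lv.
Proof.
  intros Hu Hv H.
  assert (A := is_lim_seq_le (sum_n u) (sum_n v) lu lv (sumn_le u v H) Hu Hv).
  exact A.
Qed.

Lemma is_series_comb (a b c d : nat -> R) la lb lc ld (tau K : R) :
  is_series a la -> is_series b lb -> is_series c lc -> is_series d ld ->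
  (forall k, a k <= tau * b k + (1 - tau) * (c k + K * d k)) ->
  la <= tau * lb + (1 - tau) * (lc + K * ld).
Proof.
  intros Ha Hb Hc Hd H.
  apply (is_series_le' a (fun k => tau * b k + (1 - tau) * (c k + K * d k)) la _ Ha); [|exact H].
  apply (is_series_plus (fun k => tau * b k) (fun k => (1-tau) * (c k + K * d k))).
  - apply (is_series_scal_l tau b lb Hb).
  - apply (is_series_scal_l (1-tau) (fun k => c k + K * d k)).
    apply (is_series_plus c (fun k => K * d k)); [exact Hc|].
    apply (is_series_scal_l K d ld Hd).
Qed.

Lemma C_subK theta K g : convex_fun g -> 0 <= K -> sub_K_convex theta K g.
Proof.
  intros Hc HK x y zm tau _ Hxy Ht Hy. subst y.
  specialize (Hc x zm tau Ht). nra.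
Qed.

Lemma subK_ext theta K g h : (forall y, g y = h y) -> sub_K_convex theta K h -> sub_K_convex theta K g.
Proof.
  intros E Hh x y zm tau Hz Hxy Ht Hy. rewrite !E. apply (Hh x y zm tau); auto.
Qed.

Lemma convex_mono_r g m a b : convex_fun g -> (forall w, g m <= g w) -> m <= a <= b -> g a <= g b.
Proof.
  intros Hc Hm [H1 H2].
  destruct (Req_dec a b) as [E|NE]; [subst; lra|].
  set (l := (b - a) / (b - m)).
  assert (Hl : 0 <= l <= 1).
  { unfold l; split. apply Rdiv_le_0_compat; lra.
    apply (Rmult_le_reg_r (b - m)); [lra|]. unfold Rdiv; rewrite Rmult_assoc, Rinv_l; lra. }
  assert (Ea : a = l * m + (1 - l) * b).
  { unfold l. field_simplify; [|lra]. field; lra. }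
  specialize (Hc m b l Hl). rewrite <- Ea in Hc. specialize (Hm b). nra.
Qed.

Lemma convex_mono_l g m a b : convex_fun g -> (forall w, g m <= g w) -> b <= a <= m -> g a <= g b.
Proof.
  intros Hc Hm [H1 H2].
  destruct (Req_dec a b) as [E|NE]; [subst; lra|].
  set (l := (a - b) / (m - b)).
  assert (Hl : 0 <= l <= 1).
  { unfold l; split. apply Rdiv_le_0_compat; lra.
    apply (Rmult_le_reg_r (m - b)); [lra|]. unfold Rdiv; rewrite Rmult_assoc, Rinv_l; lra. }
  assert (Ea : a = l * m + (1 - l) * b).
  { unfold l. field_simplify; [|lra]. field; lra. }
  specialize (Hc m b l Hl). rewrite <- Ea in Hc. specialize (Hm b). nra.
Qed.

Lemma V_subK theta K H S s : 0 <= K -> sub_K_convex theta K H ->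
  (forall j, H S <= H (zgrid theta j)) -> H s <= H S + K ->
  sub_K_convex theta K (Vfun H S s K).
Proof.
  intros HK Hsub Hb Hs x y zm tau Hz Hxy Ht Hy.
  assert (HVz : H S <= Vfun H S s K zm).
  { unfold Vfun; destruct (Rlt_dec zm s); [lra|]. destruct Hz as [m ->]; apply Hb. }
  unfold Vfun at 1.
  destruct (Rlt_dec y s) as [Hys|Hys].
  - unfold Vfun at 1; destruct (Rlt_dec x s); [|lra]. nra.
  - unfold Vfun; destruct (Rlt_dec x s) as [Hxs|Hxs]; destruct (Rlt_dec zm s) as [Hzs|Hzs]; try lra.
    + (* x < s <= y <= zm *)
      assert (HzS : H S <= H zm) by (destruct Hz as [m ->]; apply Hb).
      destruct (Req_dec zm s) as [E|NE].
      * assert (Ey : y = s) by lra. rewrite Ey. rewrite E in HzS. assert (tau * (H s) <= tau * (H S + K)) by (apply Rmult_le_compat_l; lra). assert ((1-tau) * (H s) <= (1-tau) * (H s + K)) by (apply Rmult_le_compat_l; lra). rewrite E. lra.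
      * set (l := (zm - y) / (zm - s)).
        assert (Hl : 0 <= l <= 1).
        { unfold l; split. apply Rdiv_le_0_compat; lra.
          apply (Rmult_le_reg_r (zm - s)); [lra|]. unfold Rdiv; rewrite Rmult_assoc, Rinv_l; lra. }
        assert (Ey : y = l * s + (1 - l) * zm).
        { unfold l. field_simplify; [|lra]. field; lra. }
        assert (Htl : tau <= l).
        { unfold l. apply (Rmult_le_reg_r (zm - s)); [lra|]. unfold Rdiv; rewrite Rmult_assoc, Rinv_l; [|lra]. nra. }
        specialize (Hsub s y zm l Hz ltac:(lra) Hl Ey).
        nra.
    + apply (Hsub x y zm tau); auto.
Qed.

Lemma V_mono theta K H S s : 0 <= K -> sub_K_convex theta K H ->
  (forall j, H S <= H (zgrid theta j)) -> H s <= H S + K ->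
  forall x zm, on_grid theta zm -> x <= zm -> Vfun H S s K x <= Vfun H S s K zm + K.
Proof.
  intros HK Hsub Hb Hs x zm Hz Hxz.
  assert (HV := V_subK theta K H S s HK Hsub Hb Hs).
  assert (HVz : H S <= Vfun H S s K zm).
  { unfold Vfun; destruct (Rlt_dec zm s); [lra|]. destruct Hz as [m ->]; apply Hb. }
  set (w := Rmin x s - 1).
  assert (Hw1 : w < x) by (unfold w; generalize (Rmin_l x s); lra).
  assert (Hw2 : w < s) by (unfold w; generalize (Rmin_r x s); lra).
  set (tau := (zm - x) / (zm - w)).
  assert (Ht : 0 <= tau <= 1).
  { unfold tau; split. apply Rdiv_le_0_compat; lra.
    apply (Rmult_le_reg_r (zm - w)); [lra|]. unfold Rdiv; rewrite Rmult_assoc, Rinv_l; lra. }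
  assert (Ex : x = tau * w + (1 - tau) * zm).
  { unfold tau. field_simplify; [|lra]. field; lra. }
  specialize (HV w x zm tau Hz ltac:(lra) Ht Ex).
  assert (Vfun H S s K w = H S + K) by (unfold Vfun; destruct (Rlt_dec w s); lra).
  nra.
Qed.

Lemma zgrid_S theta n : zgrid theta (n + 1) = zgrid theta n + theta.
Proof. unfold zgrid; rewrite plus_IZR; simpl; ring. Qed.

Lemma zgrid_nat theta k : zgrid theta (Z.of_nat k - 1) = (INR k - 1) * theta.
Proof. unfold zgrid; rewrite minus_IZR, <- INR_IZR_INZ; reflexivity. Qed.

Lemma fprob_nonneg theta F n : is_cdf_nonneg F -> 0 < theta -> 0 <= fprob theta F n.
Proof.
  intros [Hm _] Ht. unfold fprob. rewrite zgrid_S.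
  specialize (Hm (zgrid theta n) (zgrid theta n + theta) ltac:(lra)). lra.
Qed.

Lemma lim_grid theta : 0 < theta -> is_lim_seq (fun k => INR k * theta) p_infty.
Proof.
  intros Ht. assert (H := is_lim_seq_scal_r INR theta p_infty is_lim_seq_INR).
  simpl in H. destruct (Rle_dec 0 theta); [|lra].
  destruct (Rle_lt_or_eq_dec 0 theta r); [exact H|lra].
Qed.

Lemma fprob_sum theta F N :
  sum_n (fun k => fprob theta F (Z.of_nat k - 1)) N
  = F (zgrid theta (Z.of_nat N)) - F (zgrid theta (-1)).
Proof.
  induction N.
  - rewrite sum_O. unfold fprob. simpl. reflexivity.
  - rewrite sum_Sn, IHN. change plus with Rplus. unfold fprob.
    replace (Z.of_nat (S N) - 1 + 1)%Z with (Z.of_nat (S N)) by lia.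
    replace (Z.of_nat (S N) - 1)%Z with (Z.of_nat N) by lia. match goal with |- ?a = ?b => change (@eq R a b) end; ring.
Qed.

Lemma fprob_series theta F : is_cdf_nonneg F -> 0 < theta ->
  is_series (fun k => fprob theta F (Z.of_nat k - 1)) 1.
Proof.
  intros HF Ht. destruct HF as [_ [_ [H0 Hl]]].
  unfold is_series.
  apply (filterlim_ext (fun N => F (INR N * theta))).
  { intro N. rewrite fprob_sum. unfold zgrid. rewrite <- INR_IZR_INZ.
    rewrite (H0 (IZR (-1) * theta)); [ring|]. simpl. lra. }
  apply (filterlim_comp _ _ _ (fun N => INR N * theta) F eventually (Rbar_locally p_infty) (locally 1)).
  - apply (lim_grid theta Ht).
  - exact Hl.
Qed.

Lemma series_ex theta F V s c0 y : is_cdf_nonneg F -> 0 < theta ->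
  (forall w, w < s -> V w = c0) ->
  ex_series (fun k => V (y - zgrid theta (Z.of_nat k - 1)) * fprob theta F (Z.of_nat k - 1)).
Proof.
  intros HF Ht HV.
  assert (L := lim_grid theta Ht). apply is_lim_seq_spec in L.
  destruct (L (y - s + theta)) as [N HN].
  apply (ex_series_incr_n _ N).
  apply (ex_series_ext (fun k => c0 * fprob theta F (Z.of_nat (N + k) - 1))).
  { intro k. rewrite HV; [match goal with |- ?a = ?b => change (@eq R a b) end; ring|]. rewrite zgrid_nat.
    specialize (HN (N + k)%nat ltac:(lia)). lra. }
  apply (ex_series_scal_l c0 (fun k => fprob theta F (Z.of_nat (N + k) - 1))).
  apply (ex_series_incr_n (fun k => fprob theta F (Z.of_nat k - 1)) N).
  exists 1. apply fprob_series; auto.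
Qed.

Lemma grid_step theta a b : 0 < theta -> zgrid theta a < zgrid theta b -> zgrid theta a + theta <= zgrid theta b.
Proof.
  intros Ht H. unfold zgrid in *.
  assert (IZR a < IZR b) by (apply (Rmult_lt_reg_r theta); auto).
  apply lt_IZR in H0. assert (IZR (a + 1) <= IZR b) by (apply IZR_le; lia).
  rewrite plus_IZR in H1. simpl in H1. nra.
Qed.

Lemma shift_grid theta zm n : on_grid theta zm -> on_grid theta (zm - zgrid theta n).
Proof. intros [m ->]. exists (m - n)%Z. unfold zgrid. rewrite minus_IZR. ring. Qed.

Section HS.
Variables (theta alpha K K' s c0 : R) (Ct Ft Vn : R -> R).
Hypotheses (Ht : 0 < theta) (Ha : 0 <= alpha) (HK' : 0 <= K') (HaK : alpha * K' <= K)
  (Hc : convex_fun Ct) (HF : is_cdf_nonneg Ft) (HV : sub_K_convex theta K' Vn)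
  (Hconst : forall w, w < s -> Vn w = c0).

Let a u := fun k : nat => Vn (u - zgrid theta (Z.of_nat k - 1)) * fprob theta Ft (Z.of_nat k - 1).

Lemma a_series u : is_series (a u) (Series (a u)).
Proof. apply Series_correct. apply (series_ex theta Ft Vn s c0 u HF Ht Hconst). Qed.

Lemma Hstep_subK : sub_K_convex theta K (Hstep theta alpha Ct Ft Vn).
Proof.
  intros x y zm tau Hz Hxy Htau Hy. unfold Hstep.
  assert (Hs : Series (a y) <= tau * Series (a x) + (1 - tau) * (Series (a zm) + K' * 1)).
  { apply (is_series_comb (a y) (a x) (a zm) (fun k => fprob theta Ft (Z.of_nat k - 1))); try apply a_series.
    - apply fprob_series; auto.
    - intro k. unfold a. set (g := zgrid theta (Z.of_nat k - 1)).
      set (f := fprob theta Ft (Z.of_nat k - 1)).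
      assert (Hf : 0 <= f) by (apply fprob_nonneg; auto).
      assert (HVk := HV (x - g) (y - g) (zm - g) tau (shift_grid theta zm _ Hz) ltac:(lra) Htau ltac:(rewrite Hy; ring)).
      apply (Rmult_le_compat_r f) in HVk; [|exact Hf]. nra. }
  fold (a y) (a x) (a zm).
  assert (Hcy := Hc x zm tau Htau). rewrite <- Hy in Hcy.
  assert (A1 : alpha * Series (a y) <= alpha * (tau * Series (a x) + (1 - tau) * (Series (a zm) + K' * 1)))
    by (apply Rmult_le_compat_l; auto).
  assert (A2 : (1 - tau) * (alpha * K') <= (1 - tau) * K) by (apply Rmult_le_compat_l; lra).
  nra.
Qed.

Lemma Hstep_Gmono : (forall x zm, on_grid theta zm -> x <= zm -> Vn x <= Vn zm + K') ->
  forall x zm, on_grid theta zm -> x <= zm -> Series (a x) <= Series (a zm) + K'.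
Proof.
  intros Hm x zm Hz Hxz.
  apply (is_series_le' (a x) (fun k => a zm k + K' * fprob theta Ft (Z.of_nat k - 1))); [apply a_series| |].
  - replace (Series (a zm) + K') with (plus (Series (a zm)) (scal K' 1)) by (change plus with Rplus; change scal with Rmult; simpl; unfold mult; simpl; ring).
    apply (is_series_plus (a zm) (fun k => K' * fprob theta Ft (Z.of_nat k - 1))); [apply a_series|].
    apply (is_series_scal_l K' (fun k => fprob theta Ft (Z.of_nat k - 1))). apply fprob_series; auto.
  - intro k. unfold a. set (g := zgrid theta (Z.of_nat k - 1)).
    set (f := fprob theta Ft (Z.of_nat k - 1)).
    assert (Hf : 0 <= f) by (apply fprob_nonneg; auto).
    assert (HVk := Hm (x - g) (zm - g) (shift_grid theta zm _ Hz) ltac:(lra)).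
    apply (Rmult_le_compat_r f) in HVk; [|exact Hf]. nra.
Qed.
End HS.

Theorem theorem3p1
  (T : nat) (alpha : R) (c K : nat -> R) (G : nat -> R -> R)
  (F : nat -> R -> R) (ED : nat -> R) (theta : R)
  (Cm SU s Ibar I S : nat -> R) (H : nat -> R -> R)
  (* model *)
  (hT : (2 <= T)%nat)
  (halpha : 0 < alpha <= 1)
  (hK0 : forall t, (t < T)%nat -> 0 <= K t)
  (hF : forall t, (t < T)%nat -> is_cdf_nonneg (F t))
  (hED : forall t, (t < T)%nat -> is_mean_of_cdf (F t) (ED t))
  (hconv : forall t, (t < T)%nat -> convex_fun (Cfun alpha c G ED t))
  (hcoer : forall t, (t < T)%nat -> coercive (Cfun alpha c G ED t))
  (hKdec : forall t, (t + 2 <= T)%nat -> alpha * K (t + 1)%nat <= K t)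
  (* grid construction *)
  (htheta : 0 < theta)
  (hCm : forall t, (t < T)%nat -> is_least_minimizer (Cfun alpha c G ED t) (Cm t))
  (hSU : forall t, (t + 2 <= T)%nat ->
     exists n0 : Z, zgrid theta n0 < Cm t <= zgrid theta (n0 + 1) /\
       is_grid_min theta
         (fun x => Cm t <= x /\
                   Cfun alpha c G ED t x > Cfun alpha c G ED t (zgrid theta n0) + K t)
         (SU t))
  (hsT : s (T - 1)%nat <= Cm (T - 1)%nat /\
         Cfun alpha c G ED (T - 1)%nat (s (T - 1)%nat)
           = Cfun alpha c G ED (T - 1)%nat (Cm (T - 1)%nat) + K (T - 1)%nat)
  (hIbarT : Ibar (T - 1)%nat = s (T - 1)%nat)
  (hI : forall t, (t + 2 <= T)%nat ->
     is_grid_max theta (fun x => x < Rmin (Ibar (t + 1)%nat - theta) (Cm t)) (I t))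
  (hIbar : forall t, (t + 2 <= T)%nat ->
     is_grid_max theta
       (fun x => x <= I t /\ Cfun alpha c G ED t x > Cfun alpha c G ED t (I t) + K t)
       (Ibar t - theta))
  (hHT : forall y, H (T - 1)%nat y = Cfun alpha c G ED (T - 1)%nat y)
  (hST : S (T - 1)%nat = Cm (T - 1)%nat)
  (hH : forall t, (t + 2 <= T)%nat -> forall y,
     H t y = Hstep theta alpha (Cfun alpha c G ED t) (F t)
               (Vfun (H (t + 1)%nat) (S (t + 1)%nat) (s (t + 1)%nat) (K (t + 1)%nat)) y)
  (hS : forall t, (t + 2 <= T)%nat ->
     is_grid_max theta
       (fun x => I t <= x <= SU t /\
                 forall n : Z, I t <= zgrid theta n <= SU t -> H t x <= H t (zgrid theta n))
       (S t))
  (hs : forall t, (t + 2 <= T)%nat ->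
     (K t = 0 -> s t = S t) /\
     (0 < K t ->
        is_grid_min theta
          (fun x => Ibar t <= x <= S t /\ H t x <= H t (S t) + K t) (s t))) :
  forall t, (t < T)%nat ->
    sub_K_convex theta (K t) (H t) /\
    sub_K_convex theta (K t) (Vfun (H t) (S t) (s t) (K t)) /\
    (forall j : Z, H t (S t) <= H t (zgrid theta j)).
Proof.
  assert (Q : forall d t, (t + d = T - 1)%nat ->
    sub_K_convex theta (K t) (H t) /\
    (forall j : Z, H t (S t) <= H t (zgrid theta j)) /\
    H t (s t) <= H t (S t) + K t /\ Ibar t <= s t).
  { induction d as [|d IH]; intros t Htd.
    - assert (E : t = (T - 1)%nat) by lia. subst t.
      destruct (hCm (T-1)%nat ltac:(lia)) as [HminC _].
      split; [|split; [|split]].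
      + apply (subK_ext _ _ _ _ hHT). apply C_subK; [apply hconv; lia | apply hK0; lia].
      + intro j. rewrite !hHT, hST. apply HminC.
      + rewrite !hHT, hST. lra.
      + lra.
    - assert (Ht2 : (t + 2 <= T)%nat) by lia.
      destruct (IH (t + 1)%nat ltac:(lia)) as [Hsub1 [Hb1 [Hs1 HIb1]]].
      set (K' := K (t + 1)%nat) in *.
      assert (HK' : 0 <= K') by (apply hK0; lia).
      assert (HKt : 0 <= K t) by (apply hK0; lia).
      assert (HaK : alpha * K' <= K t) by (apply hKdec; lia).
      set (Vn := Vfun (H (t + 1)%nat) (S (t + 1)%nat) (s (t + 1)%nat) K').
      assert (Hconst : forall w, w < s (t + 1)%nat -> Vn w = H (t + 1)%nat (S (t + 1)%nat) + K').
      { intros w Hw. unfold Vn, Vfun. destruct (Rlt_dec w (s (t + 1)%nat)); lra. }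
      assert (HVsub := V_subK theta K' _ _ _ HK' Hsub1 Hb1 Hs1).
      assert (HVmono := V_mono theta K' _ _ _ HK' Hsub1 Hb1 Hs1).
      fold Vn in HVsub, HVmono.
      assert (HFt : is_cdf_nonneg (F t)) by (apply hF; lia).
      assert (Hconv : convex_fun (Cfun alpha c G ED t)) by (apply hconv; lia).
      destruct (hCm t ltac:(lia)) as [HminC _].
      assert (HHsub : sub_K_convex theta (K t) (H t)).
      { apply (subK_ext _ _ _ _ (hH t Ht2)).
        apply (Hstep_subK theta alpha (K t) K' (s (t+1)%nat) _ _ _ Vn htheta ltac:(lra) HaK Hconv HFt HVsub Hconst). }
      destruct (hS t Ht2) as [HSg [[[HIS HSSU] Hmin] _]].
      destruct (hI t Ht2) as [HIg [HIlt _]].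
      destruct (hSU t Ht2) as [n0 [[Hn0a Hn0b] [HSUg [[HCmSU HCSU] _]]]].
      assert (HIlt2 : I t < Ibar (t + 1)%nat - theta /\ I t < Cm t).
      { generalize (Rmin_l (Ibar (t + 1)%nat - theta) (Cm t)) (Rmin_r (Ibar (t + 1)%nat - theta) (Cm t)). lra. }
      assert (HSmin : forall j, H t (S t) <= H t (zgrid theta j)).
      { intro j.
        destruct (Rlt_le_dec (zgrid theta j) (I t)) as [Hj1|Hj1].
        -
          destruct HIg as [mI HmI].
          assert (HI : H t (S t) <= H t (I t)) by (rewrite HmI; apply Hmin; rewrite <- HmI; lra).
          assert (HE : H t (I t) <= H t (zgrid theta j)).
          { rewrite !(hH t Ht2). unfold Hstep. fold K'. fold Vn.
            rewrite (Series_ext (fun k => Vn (zgrid theta j - zgrid theta (Z.of_nat k - 1)) * fprob theta (F t) (Z.of_nat k - 1))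
                      (fun k => Vn (I t - zgrid theta (Z.of_nat k - 1)) * fprob theta (F t) (Z.of_nat k - 1))).
            + assert (Cfun alpha c G ED t (I t) <= Cfun alpha c G ED t (zgrid theta j)).
              { apply (convex_mono_l _ (Cm t)); auto. lra. }
              lra.
            + intro k. rewrite !Hconst; auto; rewrite zgrid_nat; generalize (pos_INR k); nra. }
          lra.
        - destruct (Rle_lt_dec (zgrid theta j) (SU t)) as [Hj2|Hj2].
          + apply Hmin. lra.
          +
            assert (HIn0 : I t <= zgrid theta n0).
            { destruct HIg as [mI HmI]. rewrite HmI in *.
              destruct (Rle_lt_dec (zgrid theta mI) (zgrid theta n0)) as [?|Hlt]; [auto|].
              apply grid_step in Hlt; auto. rewrite <- zgrid_S in Hlt. lra. }
            assert (H1 : H t (S t) <= H t (zgrid theta n0)) by (apply Hmin; lra).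
            assert (H2 : H t (zgrid theta n0) <= H t (zgrid theta j)).
            { rewrite !(hH t Ht2). unfold Hstep. fold K'. fold Vn.
              assert (G1 := Hstep_Gmono theta K' (s (t+1)%nat) _ (F t) Vn htheta HFt Hconst HVmono
                       (zgrid theta n0) (zgrid theta j) ltac:(exists j; reflexivity) ltac:(lra)).
              simpl in G1.
              assert (C1 : Cfun alpha c G ED t (SU t) <= Cfun alpha c G ED t (zgrid theta j)).
              { apply (convex_mono_r _ (Cm t)); auto. lra. }
              assert (A1 : alpha * Series (fun k => Vn (zgrid theta n0 - zgrid theta (Z.of_nat k - 1)) * fprob theta (F t) (Z.of_nat k - 1))
                 <= alpha * (Series (fun k => Vn (zgrid theta j - zgrid theta (Z.of_nat k - 1)) * fprob theta (F t) (Z.of_nat k - 1)) + K'))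
                by (apply Rmult_le_compat_l; lra).
              lra. }
            lra. }
      destruct (hs t Ht2) as [hs0 hspos].
      assert (HsS : H t (s t) <= H t (S t) + K t /\ Ibar t <= s t).
      { destruct (Req_dec (K t) 0) as [E0|E0].
        - rewrite (hs0 E0). split; [lra|].
          destruct (hIbar t Ht2) as [[a Ha] [[HIa HCa] _]].
          destruct HIg as [b Hb].
          rewrite Ha in *. rewrite Hb in *.
          assert (Hne : zgrid theta a < zgrid theta b).
          { destruct (Rle_lt_or_eq_dec _ _ HIa) as [?|Eq]; auto. rewrite Eq in HCa. lra. }
          apply grid_step in Hne; auto. lra.
        - destruct (hspos ltac:(lra)) as [_ [[[HIbs _] Hle] _]]. lra. }
      tauto. }
  intros t Ht.
  destruct (Q (T - 1 - t)%nat t ltac:(lia)) as [Hsub [Hb [Hs _]]].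
  split; [exact Hsub|]. split; [|exact Hb].
  apply V_subK; auto.
Qed.
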